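(* Let $\mathsf H$ be a horizontal connection on $\mathsf q_M$. Then for every $m\in M$, $\mathsf H(\mathsf d(m))$ lies in the image of $j_{\Omega(A)}\otimes_Aj_M:\Omega(A)\otimes_AM\to\mathsf T(A)\otimes_A\mathsf S_A(M)$; equivalently $(j_{\Omega(A)}\otimes_Aj_M)\circ(p_{\Omega(A)}\otimes_Ap_M)\circ\mathsf H\circ\mathsf d=\mathsf H\circ\mathsf d$ on $M$.
   Context: Fix a commutative ring $R$, a commutative $R$-algebra $A$ and an $A$-module $M$. ''Algebra'' means commutative $R$-algebra and ''algebra map'' means $R$-algebra homomorphism. $\Omega(A)$ is the $A$-module of Kähler differentials of $A$ over $R$, with universal derivation $\mathsf d:A\to\Omega(A)$. Tangent algebras: for an algebra $B$, $\mathsf T(B):=\mathrm{Sym}_B(\Omega(B))$, i.e. the $B$-algebra generated by symbols $\mathsf d(b)$ ($b\in B$) subject to $\mathsf d(b+b')=\mathsf d(b)+\mathsf d(b')$, $\mathsf d(bb')=b\,\mathsf d(b')+b'\,\mathsf d(b)$, $\mathsf d(r1)=0$ ($r\in R$). An algebra map out of $\mathsf T(B)$ is determined by its values on the generators $b$, $\mathsf d(b)$. Write $\mathsf T^2(B)=\mathsf T(\mathsf T(B))$ and denote the universal derivation $\mathsf T(B)\to\mathsf T^2(B)$ by $\mathsf d'$; so $\mathsf T^2(B)$ is generated over $B$ by $\mathsf d(b),\mathsf d'(b),\mathsf d'\mathsf d(b)$. For an algebra map $h:X\to Y$, $\mathsf T(h):\mathsf T(X)\to\mathsf T(Y)$ sends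 $x\mapsto h(x)$ and $\delta_X(x)\mapsto\delta_Y(h(x))$, where $\delta$ denotes the relevant universal derivation ($\mathsf d$ for $B\to\mathsf T(B)$, $\mathsf d'$ for $\mathsf T(B)\to\mathsf T^2(B)$). Algebra maps defined on generators $b\in B$: $\mathsf p_B:B\to\mathsf T(B)$ the inclusion; $0_B:\mathsf T(B)\to B$, $b\mapsto b$, $\mathsf d(b)\mapsto 0$; $\ell_B:\mathsf T^2(B)\to\mathsf T(B)$, $b\mapsto b$, $\mathsf d(b)\mapsto 0$, $\mathsf d'(b)\mapsto0$, $\mathsf d'\mathsf d(b)\mapsto\mathsf d(b)$; $\mathsf c_B:\mathsf T^2(B)\to\mathsf T^2(B)$, $b\mapsto b$, $\mathsf d(b)\mapsto\mathsf d'(b)$, $\mathsf d'(b)\mapsto\mathsf d(b)$, $\mathsf d'\mathsf d(b)\mapsto\mathsf d'\mathsf d(b)$. (These are, read in algebras, the structure maps of the Rosický tangent structure on affine schemes over $R$, i.e. on the opposite of the category of commutative $R$-algebras.) Differential bundle of $M$: $\mathsf S_A(M)$ is the symmetric $A$-algebra on $M$ (generated by $a\in A$, $m\in M$). Algebra maps: $\mathsf q_M:A\to\mathsf S_A(M)$ the inclusion; $\lambda_M:\mathsf T(\mathsf S_A(M))\to\mathsf S_A(M)$, $a\mapsto a$, $m\mapsto0$, $\mathsf d(a)\mapsto 0$, $\mathsf d(m)\mapsto m$. The maps $j_{\Omega(A)}:\Omega(A)\to\mathsf T(A)$, $j_M:M\to\mathsf S_A(M)$ are the inclusions of the degree-one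 summands and $p_{\Omega(A)}$, $p_M$ the projections onto them. A horizontal connection on $\mathsf q_M$ is an algebra map $\mathsf H:\mathsf T(\mathsf S_A(M))\to\mathsf T(A)\otimes_A\mathsf S_A(M)$ such that (H1) $\mathsf H(\mathsf T(\mathsf q_M)(w))=w\otimes1$ for all $w\in\mathsf T(A)$; (H2) $\mathsf H(v)=1\otimes v$ for all $v\in\mathsf S_A(M)$; (H3) $(\ell_A\otimes0_{\mathsf S_A(M)})\circ\theta\circ\mathsf T(\mathsf H)=\mathsf H\circ\ell_{\mathsf S_A(M)}$; (H4) $(0_{\mathsf T(A)}\otimes\lambda_M)\circ\theta\circ\mathsf T(\mathsf H)=\mathsf H\circ\mathsf T(\lambda_M)\circ\mathsf c_{\mathsf S_A(M)}$. Here $\mathsf T^2(A)\otimes_{\mathsf T(A)}\mathsf T(\mathsf S_A(M))$ is formed via $\mathsf T(\mathsf p_A):\mathsf T(A)\to\mathsf T^2(A)$ ($a\mapsto a$, $\mathsf d(a)\mapsto\mathsf d'(a)$) and $\mathsf T(\mathsf q_M)$; $\theta:\mathsf T(\mathsf T(A)\otimes_A\mathsf S_A(M))\to\mathsf T^2(A)\otimes_{\mathsf T(A)}\mathsf T(\mathsf S_A(M))$ is the canonical isomorphism, $w\otimes v\mapsto w\otimes v$, $\mathsf d(w\otimes v)\mapsto\mathsf d'(w)\otimes v+w\otimes\mathsf d(v)$; the maps $\ell_A\otimes0_{\mathsf S_A(M)}$ and $0_{\mathsf T(A)}\otimes\lambda_M$ into $\mathsf T(A)\otimes_A\mathsf S_A(M)$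 are induced factorwise, where $0_{\mathsf T(A)}:\mathsf T^2(A)\to\mathsf T(A)$ sends $a\mapsto a$, $\mathsf d(a)\mapsto\mathsf d(a)$, $\mathsf d'(a)\mapsto0$, $\mathsf d'\mathsf d(a)\mapsto0$. *)

(* Defs.v *)
(* Commutative R-algebras, Kaehler/tangent algebras, symmetric
   algebras and tensor products of algebras are not in MathComp; they are
   specified here by their universal properties (which determine them up to
   unique isomorphism). *)
From HB Require Import structures.
From mathcomp Require Import all_boot all_order all_algebra.
Set Implicit Arguments. Unset Strict Implicit. Unset Printing Implicit Defensive.
Import GRing.Theory.
Local Open Scope ring_scope.

Definition is_ringmor (X Y : pzRingType) (f : X -> Y) : Prop :=
  (forall x y, f (x + y) = f x + f y) /\
  (forall x y, f (x * y) = f x * f y) /\ f 1 = 1.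

Record alg (R : comPzRingType) := Alg {
  alg_car :> comPzRingType;
  alg_str : R -> alg_car;
  alg_strP : is_ringmor alg_str }.

Section Defs.
Variable R : comPzRingType.

Definition is_algmap (X Y : alg R) (f : X -> Y) : Prop :=
  is_ringmor f /\ (forall r, f (alg_str X r) = alg_str Y r).

Definition is_der (X Y : alg R) (f D : X -> Y) : Prop :=
  (forall x y, D (x + y) = D x + D y) /\
  (forall x y, D (x * y) = f x * D y + f y * D x) /\
  (forall r, D (alg_str X r) = 0).

(* (T, p, d) is the tangent algebra T(B) = Sym_B(Omega(B)) of B, with
   inclusion p = p_B and universal derivation d : B -> T(B). *)
Definition is_tangent (B T : alg R) (p d : B -> T) : Prop :=
  is_algmap p /\ is_der p d /\
  forall (C : alg R) (f D : B -> C), is_algmap f -> is_der f D ->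
    exists g : T -> C,
      (is_algmap g /\ (forall b, g (p b) = f b) /\ (forall b, g (d b) = D b)) /\
      (forall g' : T -> C,
         is_algmap g' -> (forall b, g' (p b) = f b) -> (forall b, g' (d b) = D b) ->
         forall t, g' t = g t).

(* (S, q, j) is the symmetric A-algebra S_A(M) on the A-module M, with
   q = q_M : A -> S_A(M) and j = j_M : M -> S_A(M) the inclusions. *)
Definition is_symalg (A S : alg R) (M : lmodType A) (q : A -> S) (j : M -> S)
  : Prop :=
  is_algmap q /\ (forall m m', j (m + m') = j m + j m') /\
  (forall (a : A) (m : M), j (a *: m) = q a * j m) /\
  forall (C : alg R) (f : A -> C) (g : M -> C), is_algmap f ->
    (forall m m', g (m + m') = g m + g m') ->
    (forall (a : A) (m : M), g (a *: m) = f a * g m) ->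
    exists h : S -> C,
      (is_algmap h /\ (forall a, h (q a) = f a) /\ (forall m, h (j m) = g m)) /\
      (forall h' : S -> C,
         is_algmap h' -> (forall a, h' (q a) = f a) -> (forall m, h' (j m) = g m) ->
         forall s, h' s = h s).

(* (P, ix, iy) is the tensor product X (x)_Z Y of commutative R-algebras
   formed via u : Z -> X and v : Z -> Y (the pushout); x (x) y = ix x * iy y. *)
Definition is_tensor (Z X Y P : alg R) (u : Z -> X) (v : Z -> Y)
  (ix : X -> P) (iy : Y -> P) : Prop :=
  is_algmap ix /\ is_algmap iy /\ (forall z, ix (u z) = iy (v z)) /\
  forall (C : alg R) (a : X -> C) (b : Y -> C), is_algmap a -> is_algmap b ->
    (forall z, a (u z) = b (v z)) ->
    exists h : P -> C,
      (is_algmap h /\ (forall x, h (ix x) = a x) /\ (forall y, h (iy y) = b y)) /\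
      (forall h' : P -> C,
         is_algmap h' -> (forall x, h' (ix x) = a x) -> (forall y, h' (iy y) = b y) ->
         forall t, h' t = h t).

End Defs.

(* Main.v *)
Require Import Defs.
From HB Require Import structures.
From mathcomp Require Import all_boot all_order all_algebra.
From Stdlib Require Import ClassicalDescription.
Set Implicit Arguments. Unset Strict Implicit.
Import GRing.Theory.
Local Open Scope ring_scope.

Definition bp (X : comPzRingType) (B : X -> Prop) : pred X :=
  fun x => if excluded_middle_informative (B x) then true else false.
Lemma bpP (X : comPzRingType) (B : X -> Prop) x : bp B x <-> B x.
Proof. rewrite /bp; case: excluded_middle_informative => //. Qed.

Definition subT (X : comPzRingType) (B : X -> Prop) (cB : subring_closed (bp B)) :=
  {x : X | bp B x}.
HB.instance Definition _ X B cB := [isSub of @subT X B cB for @sval X (bp B)].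
HB.instance Definition _ X B cB := [Choice of @subT X B cB by <:].
HB.instance Definition _ X B cB :=
  GRing.SubChoice_isSubComPzRing.Build X (bp B) (@subT X B cB) cB.
Lemma valD X B cB (x y : @subT X B cB) : val (x + y) = val x + val y.
Proof. by []. Qed.
Lemma valM X B cB (x y : @subT X B cB) : val (x * y) = val x * val y.
Proof. by []. Qed.
Lemma val1 X B cB : val (1 : @subT X B cB) = 1.
Proof. by []. Qed.

Definition pclosed (R : comPzRingType) (X : alg R) (B : X -> Prop) :=
  (forall r, B (alg_str X r)) /\ (forall x y, B x -> B y -> B (x - y)) /\
  (forall x y, B x -> B y -> B (x * y)).

Lemma ringmor1 (X Y : pzRingType) (f : X -> Y) : is_ringmor f -> f 1 = 1.
Proof. by case=> _ []. Qed.
Lemma ringmorD (X Y : pzRingType) (f : X -> Y) : is_ringmor f -> forall x y, f (x + y) = f x + f y.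
Proof. by case. Qed.
Lemma ringmorM (X Y : pzRingType) (f : X -> Y) : is_ringmor f -> forall x y, f (x * y) = f x * f y.
Proof. by case=> _ []. Qed.
Lemma ringmor0 (X Y : pzRingType) (f : X -> Y) : is_ringmor f -> f 0 = 0.
Proof. by move=> h; apply: (addrI (f 0)); rewrite -ringmorD // !addr0. Qed.
Lemma ringmorN (X Y : pzRingType) (f : X -> Y) : is_ringmor f -> forall x, f (- x) = - f x.
Proof. move=> h x; apply/eqP; rewrite -subr_eq0 opprK -ringmorD // addNr; exact/eqP/ringmor0. Qed.
Lemma ringmorB (X Y : pzRingType) (f : X -> Y) : is_ringmor f -> forall x y, f (x - y) = f x - f y.
Proof. by move=> h x y; rewrite ringmorD // ringmorN. Qed.

Lemma pclosed_sub R (X : alg R) (B : X -> Prop) : pclosed B -> subring_closed (bp B).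
Proof.
case=> [h1 [h2 h3]]; split.
- apply/bpP; rewrite -(ringmor1 (alg_strP X)); exact: h1.
- by move=> x y /bpP hx /bpP hy; apply/bpP; apply: h2.
- by move=> x y /bpP hx /bpP hy; apply/bpP; apply: h3.
Qed.

Definition mkS R (X : alg R) (B : X -> Prop) (cB : pclosed B) (x : X) (h : B x)
  : @subT X B (pclosed_sub cB) := exist _ x (proj2 (bpP B x) h).

Lemma mkS_str R (X : alg R) (B : X -> Prop) (cB : pclosed B) :
  is_ringmor (fun r => mkS cB (proj1 cB r)).
Proof.
split; [|split].
- by move=> x y; apply: val_inj; rewrite valD /= (ringmorD (alg_strP X)).
- by move=> x y; apply: val_inj; rewrite valM /= (ringmorM (alg_strP X)).
- by apply: val_inj; rewrite val1 /= (ringmor1 (alg_strP X)).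
Qed.

Definition subA R (X : alg R) (B : X -> Prop) (cB : pclosed B) : alg R :=
  @Alg R (@subT X B (pclosed_sub cB)) _ (mkS_str cB).

Lemma val_algmap R (X : alg R) (B : X -> Prop) (cB : pclosed B) :
  is_algmap (fun y : subA cB => (val y : X)).
Proof. by split; [split; [|split]|] => //. Qed.

Lemma lift_algmap R (X Y : alg R) (B : X -> Prop) (cB : pclosed B) (f : Y -> X)
  (hf : forall y, B (f y)) : is_algmap f ->
  is_algmap (fun y => (mkS cB (hf y) : subA cB)).
Proof.
case=> fr fs; split; [split; [|split]|].
- by move=> x y; apply: val_inj; rewrite valD /= (ringmorD fr).
- by move=> x y; apply: val_inj; rewrite valM /= (ringmorM fr).
- by apply: val_inj; rewrite val1 /= (ringmor1 fr).
- by move=> r; apply: val_inj => /=.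
Qed.

Lemma tangent_gen R (Bs T : alg R) (p d : Bs -> T) (Ht : is_tangent p d)
  (B : T -> Prop) (cB : pclosed B) (hp : forall b, B (p b)) (hd : forall b, B (d b)) :
  forall t, B t.
Proof.
case: Ht => [pa [dd U]].
have fa := lift_algmap cB hp pa.
have dd' : is_der (fun y => (mkS cB (hp y) : subA cB)) (fun y => (mkS cB (hd y) : subA cB)).
  case: dd => [d1 [d2 d3]]; split; [|split].
  - by move=> x y; apply: val_inj; rewrite valD /= d1.
  - by move=> x y; apply: val_inj; rewrite valD !valM /= d2.
  - by move=> r; apply: val_inj; rewrite /= d3.
have [g [[ga [gp gd]] _]] := U _ _ _ fa dd'.
have [g0 [_ g0U]] := U _ _ _ pa dd.
have ida : is_algmap (fun t : T => t) by split; [split; [|split]|].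
have e1 := g0U (fun t => t) ida (fun _ => erefl) (fun _ => erefl).
have vga : is_algmap (fun t => (val (g t) : T)).
  case: ga => [[g1 [g2 g3]] g4]; split; [split; [|split]|].
  - by move=> x y; rewrite g1.
  - by move=> x y; rewrite g2.
  - by rewrite g3.
  - by move=> r; rewrite g4.
have e2 := g0U _ vga (fun b => congr1 val (gp b)) (fun b => congr1 val (gd b)).
move=> t; have -> : t = val (g t) by apply: (etrans (e1 t)); symmetry; exact: (e2 t).
apply/bpP; exact: (valP (g t)).
Qed.

Lemma algmap_val R (X Y : alg R) (B : X -> Prop) (cB : pclosed B) (g : Y -> subA cB) :
  is_algmap g -> is_algmap (fun t => (val (g t) : X)).
Proof.
case=> [[g1 [g2 g3]] g4]; split; [split; [|split]|].
- by move=> x y; rewrite g1.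
- by move=> x y; rewrite g2.
- by rewrite g3.
- by move=> r; rewrite g4.
Qed.

Lemma id_algmap R (X : alg R) : is_algmap (fun t : X => t).
Proof. by split; [split; [|split]|]. Qed.

Lemma symalg_gen R (A S : alg R) (M : lmodType A) (q : A -> S) (j : M -> S)
  (Hs : is_symalg q j)
  (B : S -> Prop) (cB : pclosed B) (hq : forall b, B (q b)) (hj : forall b, B (j b)) :
  forall t, B t.
Proof.
case: Hs => [qa [jD [jZ U]]].
have fa := lift_algmap cB hq qa.
have gD : forall m m', (mkS cB (hj (m + m')) : subA cB) = mkS cB (hj m) + mkS cB (hj m').
  by move=> m m'; apply: val_inj; rewrite valD /= jD.
have gZ : forall (a : A) m, (mkS cB (hj (a *: m)) : subA cB) = mkS cB (hq a) * mkS cB (hj m).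
  by move=> a m; apply: val_inj; rewrite valM /= jZ.
have [g [[ga [gp gd]] _]] := U _ _ _ fa gD gZ.
have [g0 [_ g0U]] := U _ _ _ qa jD jZ.
have e1 := g0U (fun t => t) (id_algmap S) (fun _ => erefl) (fun _ => erefl).
have e2 := g0U _ (algmap_val ga) (fun b => congr1 val (gp b)) (fun b => congr1 val (gd b)).
move=> t; have -> : t = val (g t) by apply: (etrans (e1 t)); symmetry; exact: (e2 t).
apply/bpP; exact: (valP (g t)).
Qed.

Lemma tensor_gen R (Z X Y P : alg R) (u : Z -> X) (v : Z -> Y) (ix : X -> P) (iy : Y -> P)
  (Hs : is_tensor u v ix iy)
  (B : P -> Prop) (cB : pclosed B) (hx : forall b, B (ix b)) (hy : forall b, B (iy b)) :
  forall t, B t.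
Proof.
case: Hs => [xa [ya [c U]]].
have fa := lift_algmap cB hx xa.
have fb := lift_algmap cB hy ya.
have c' : forall z, (mkS cB (hx (u z)) : subA cB) = mkS cB (hy (v z)).
  by move=> z; apply: val_inj => /=.
have [g [[ga [gp gd]] _]] := U _ _ _ fa fb c'.
have [g0 [_ g0U]] := U _ _ _ xa ya c.
have e1 := g0U (fun t => t) (id_algmap P) (fun _ => erefl) (fun _ => erefl).
have e2 := g0U _ (algmap_val ga) (fun b => congr1 val (gp b)) (fun b => congr1 val (gd b)).
move=> t; have -> : t = val (g t) by apply: (etrans (e1 t)); symmetry; exact: (e2 t).
apply/bpP; exact: (valP (g t)).
Qed.

Lemma add_sum (X Y : pzRingType) (f : X -> Y) (hD : forall x y, f (x + y) = f x + f y)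
  (I : Type) (s : seq I) (F : I -> X) : f (\sum_(i <- s) F i) = \sum_(i <- s) f (F i).
Proof.
have f0 : f 0 = 0 by apply: (addrI (f 0)); rewrite -hD !addr0.
elim: s => [|a s IH]; first by rewrite !big_nil.
by rewrite !big_cons hD IH.
Qed.

Lemma addN (X Y : zmodType) (f : X -> Y) (hD : forall x y, f (x + y) = f x + f y) :
  forall x, f (- x) = - f x.
Proof.
have f0 : f 0 = 0 by apply: (addrI (f 0)); rewrite -hD !addr0.
move=> x; apply/eqP; rewrite -subr_eq0 opprK -hD addNr f0 //.
Qed.
Lemma add0 (X Y : zmodType) (f : X -> Y) (hD : forall x y, f (x + y) = f x + f y) : f 0 = 0.
Proof. by apply: (addrI (f 0)); rewrite -hD !addr0. Qed.
Lemma addB (X Y : zmodType) (f : X -> Y) (hD : forall x y, f (x + y) = f x + f y) :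
  forall x y, f (x - y) = f x - f y.
Proof. by move=> x y; rewrite hD (addN hD). Qed.

Unset Implicit Arguments.

Theorem mainTheorem6
  (R : comPzRingType) (A : alg R) (M : lmodType A)
  (* T(A), with p_A and d *)
  (TA : alg R) (pA dA : A -> TA) (HTA : is_tangent pA dA)
  (* S_A(M), with q_M and j_M *)
  (SM : alg R) (q : A -> SM) (jM : M -> SM) (HSM : is_symalg q jM)
  (* T(S_A(M)), with p_{S_A(M)} and d *)
  (TS : alg R) (pS dS : SM -> TS) (HTS : is_tangent pS dS)
  (* P = T(A) (x)_A S_A(M), formed via p_A and q_M *)
  (P : alg R) (ix1 : TA -> P) (iy1 : SM -> P) (HP : is_tensor pA q ix1 iy1)
  (* T^2(A) = T(T(A)), with inclusion and d' *)
  (T2A : alg R) (pA' dA' : TA -> T2A) (HT2A : is_tangent pA' dA')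
  (* T^2(S_A(M)) *)
  (T2S : alg R) (pS' dS' : TS -> T2S) (HT2S : is_tangent pS' dS')
  (* T(P) *)
  (TP : alg R) (pP dP : P -> TP) (HTP : is_tangent pP dP)
  (* T(q_M) *)
  (Tq : TA -> TS)
  (HTq : is_algmap Tq /\ (forall a, Tq (pA a) = pS (q a)) /\
         (forall a, Tq (dA a) = dS (q a)))
  (* T(p_A) *)
  (TpA : TA -> T2A)
  (HTpA : is_algmap TpA /\ (forall a, TpA (pA a) = pA' (pA a)) /\
          (forall a, TpA (dA a) = dA' (pA a)))
  (* Q = T^2(A) (x)_{T(A)} T(S_A(M)), formed via T(p_A) and T(q_M) *)
  (Q : alg R) (ix2 : T2A -> Q) (iy2 : TS -> Q) (HQ : is_tensor TpA Tq ix2 iy2)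
  (* theta *)
  (theta : TP -> Q)
  (Htheta : is_algmap theta /\
     (forall (w : TA) (v : SM),
        theta (pP (ix1 w * iy1 v)) = ix2 (pA' w) * iy2 (pS v)) /\
     (forall (w : TA) (v : SM),
        theta (dP (ix1 w * iy1 v)) =
          ix2 (dA' w) * iy2 (pS v) + ix2 (pA' w) * iy2 (dS v)))
  (* ell_A *)
  (ellA : T2A -> TA)
  (HellA : is_algmap ellA /\
     (forall a, ellA (pA' (pA a)) = pA a) /\ (forall a, ellA (pA' (dA a)) = 0) /\
     (forall a, ellA (dA' (pA a)) = 0) /\ (forall a, ellA (dA' (dA a)) = dA a))
  (* ell_{S_A(M)} *)
  (ellS : T2S -> TS)
  (HellS : is_algmap ellS /\
     (forall b, ellS (pS' (pS b)) = pS b) /\ (forall b, ellS (pS' (dS b)) = 0) /\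
     (forall b, ellS (dS' (pS b)) = 0) /\ (forall b, ellS (dS' (dS b)) = dS b))
  (* 0_{S_A(M)} *)
  (zS : TS -> SM)
  (HzS : is_algmap zS /\ (forall b, zS (pS b) = b) /\ (forall b, zS (dS b) = 0))
  (* 0_{T(A)} *)
  (zTA : T2A -> TA)
  (HzTA : is_algmap zTA /\
     (forall a, zTA (pA' (pA a)) = pA a) /\ (forall a, zTA (pA' (dA a)) = dA a) /\
     (forall a, zTA (dA' (pA a)) = 0) /\ (forall a, zTA (dA' (dA a)) = 0))
  (* lambda_M *)
  (lam : TS -> SM)
  (Hlam : is_algmap lam /\
     (forall a, lam (pS (q a)) = q a) /\ (forall m, lam (pS (jM m)) = 0) /\
     (forall a, lam (dS (q a)) = 0) /\ (forall m, lam (dS (jM m)) = jM m))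
  (* c_{S_A(M)} *)
  (cS : T2S -> T2S)
  (HcS : is_algmap cS /\
     (forall b, cS (pS' (pS b)) = pS' (pS b)) /\
     (forall b, cS (pS' (dS b)) = dS' (pS b)) /\
     (forall b, cS (dS' (pS b)) = pS' (dS b)) /\
     (forall b, cS (dS' (dS b)) = dS' (dS b)))
  (* T(lambda_M) *)
  (Tlam : T2S -> TS)
  (HTlam : is_algmap Tlam /\ (forall x, Tlam (pS' x) = pS (lam x)) /\
           (forall x, Tlam (dS' x) = dS (lam x)))
  (* ell_A (x) 0_{S_A(M)} *)
  (L1 : Q -> P)
  (HL1 : is_algmap L1 /\ (forall x, L1 (ix2 x) = ix1 (ellA x)) /\
         (forall y, L1 (iy2 y) = iy1 (zS y)))
  (* 0_{T(A)} (x) lambda_M *)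
  (L2 : Q -> P)
  (HL2 : is_algmap L2 /\ (forall x, L2 (ix2 x) = ix1 (zTA x)) /\
         (forall y, L2 (iy2 y) = iy1 (lam y)))
  (* the horizontal connection H and T(H) *)
  (H : TS -> P) (HH : is_algmap H)
  (TH : T2S -> TP)
  (HTH : is_algmap TH /\ (forall x, TH (pS' x) = pP (H x)) /\
         (forall x, TH (dS' x) = dP (H x)))
  (H1 : forall w : TA, H (Tq w) = ix1 w * iy1 1)
  (H2 : forall v : SM, H (pS v) = ix1 1 * iy1 v)
  (H3 : forall z : T2S, L1 (theta (TH z)) = H (ellS z))
  (H4 : forall z : T2S, L2 (theta (TH z)) = H (Tlam (cS z))) :
  forall m : M, exists s : seq ((A * A) * M),
    H (dS (jM m)) =
      \sum_(t <- s) ix1 (pA t.1.1 * dA t.1.2) * iy1 (jM t.2).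
Proof.
move=> m.
have [pAa [dAd _]] := HTA.
have [pA'a [dA'd _]] := HT2A.
have [pSa [dSd _]] := HTS.
have [pPa [dPd _]] := HTP.
have [qa [jD [jZ _]]] := HSM.
have [ix1a [iy1a _]] := HP.
have [ix2a [iy2a _]] := HQ.
have [tha [thp thd]] := Htheta.
have [ellAa [ellA1 [ellA2 [ellA3 ellA4]]]] := HellA.
have [ellSa [ellS1 [ellS2 [ellS3 ellS4]]]] := HellS.
have [zSa [zS1 zS2]] := HzS.
have [zTAa [zTA1 [zTA2 [zTA3 zTA4]]]] := HzTA.
have [lama [lam1 [lam2 [lam3 lam4]]]] := Hlam.
have [cSa [cS1 [cS2 [cS3 cS4]]]] := HcS.
have [Tlama [Tlam1 Tlam2]] := HTlam.
have [L1a [L11 L12]] := HL1.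
have [L2a [L21 L22]] := HL2.
have [THa [TH1 TH2]] := HTH.
have cd : forall t, zTA (dA' t) = 0 /\ zTA (pA' t) = t.
  apply: (tangent_gen HTA).
  - split; [|split].
    + move=> r; case: dA'd => _ [_ ->]; rewrite (ringmor0 zTAa.1); split => //.
      by rewrite pA'a.2 zTAa.2.
    + move=> x y [h1 h2] [h3 h4]; rewrite (addB dA'd.1) (ringmorB zTAa.1) h1 h3 subr0.
      by rewrite (ringmorB pA'a.1) (ringmorB zTAa.1) h2 h4.
    + move=> x y [h1 h2] [h3 h4]; rewrite dA'd.2.1 (ringmorD zTAa.1) !(ringmorM zTAa.1).
      by rewrite h1 h2 h3 h4 !mulr0 addr0 (ringmorM pA'a.1) (ringmorM zTAa.1) h2 h4.
  - by move=> a; split; [exact: zTA3| exact: zTA1].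
  - by move=> a; split; [exact: zTA4| exact: zTA2].
have cc : forall v, (exists a, lam (pS v) = q a) /\ (exists m', lam (dS v) = jM m').
  apply: (symalg_gen HSM).
  - split; [|split].
    + move=> r; split.
        by exists (alg_str A r); rewrite pSa.2 lama.2 qa.2.
      exists 0; rewrite dSd.2.2 (ringmor0 lama.1); exact/esym/(add0 jD).
    + move=> x y [[a1 h1] [m1 h2]] [[a2 h3] [m2 h4]]; split.
        by exists (a1 - a2); rewrite (ringmorB pSa.1) (ringmorB lama.1) h1 h3 (ringmorB qa.1).
      by exists (m1 - m2); rewrite (addB dSd.1) (ringmorB lama.1) h2 h4 (addB jD).
    + move=> x y [[a1 h1] [m1 h2]] [[a2 h3] [m2 h4]]; split.
        by exists (a1 * a2); rewrite (ringmorM pSa.1) (ringmorM lama.1) h1 h3 (ringmorM qa.1).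
      exists (a1 *: m2 + a2 *: m1); rewrite dSd.2.1 (ringmorD lama.1) !(ringmorM lama.1).
      by rewrite h1 h2 h3 h4 jD !jZ.
  - move=> a; split; first by exists a; apply: lam1.
    exists 0; rewrite lam3; exact/esym/(add0 jD).
  - move=> m'; split; last by exists m'; apply: lam4.
    by exists 0; rewrite lam2 (ringmor0 qa.1).
have cb : forall t, (exists a, ellA (pA' t) = pA a) /\
    (exists s : seq (A * A), ellA (dA' t) = \sum_(x <- s) pA x.1 * dA x.2).
  apply: (tangent_gen HTA).
  - split; [|split].
    + move=> r; split.
        by exists (alg_str A r); rewrite pA'a.2 ellAa.2 pAa.2.
      by exists [::]; rewrite dA'd.2.2 (ringmor0 ellAa.1) big_nil.
    + move=> x y [[a1 h1] [s1 h2]] [[a2 h3] [s2 h4]]; split.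
        by exists (a1 - a2); rewrite (ringmorB pA'a.1) (ringmorB ellAa.1) h1 h3 (ringmorB pAa.1).
      exists (s1 ++ map (fun x => (- x.1, x.2)) s2).
      rewrite (addB dA'd.1) (ringmorB ellAa.1) h2 h4 big_cat big_map /= -sumrN.
      by congr (_ + _); apply: eq_bigr => i _; rewrite (ringmorN pAa.1) mulNr.
    + move=> x y [[a1 h1] [s1 h2]] [[a2 h3] [s2 h4]]; split.
        by exists (a1 * a2); rewrite (ringmorM pA'a.1) (ringmorM ellAa.1) h1 h3 (ringmorM pAa.1).
      exists (map (fun z => (a1 * z.1, z.2)) s2 ++ map (fun z => (a2 * z.1, z.2)) s1).
      rewrite dA'd.2.1 (ringmorD ellAa.1) !(ringmorM ellAa.1) h1 h2 h3 h4.
      rewrite big_cat !big_map /= !mulr_sumr.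
      by congr (_ + _); apply: eq_bigr => i _; rewrite (ringmorM pAa.1) mulrA.
  - move=> a; split; first by exists a; apply: ellA1.
    by exists [::]; rewrite ellA3 big_nil.
  - move=> a; split; first by exists 0; rewrite ellA2 (ringmor0 pAa.1).
    by exists [:: (1, a)]; rewrite ellA4 big_seq1 /= (ringmor1 pAa.1) mul1r.
have iy11 : iy1 1 = 1 := ringmor1 iy1a.1.
have ix11 : ix1 1 = 1 := ringmor1 ix1a.1.
have ca : forall y, exists s : seq (TA * SM), y = \sum_(x <- s) ix1 x.1 * iy1 x.2.
  apply: (tensor_gen HP).
  - split; [|split].
    + move=> r; exists [:: (alg_str TA r, 1)].
      by rewrite big_seq1 /= iy11 mulr1 ix1a.2.
    + move=> x y [s1 ->] [s2 ->]; exists (s1 ++ map (fun z => (- z.1, z.2)) s2).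
      rewrite big_cat big_map /= -sumrN.
      by congr (_ + _); apply: eq_bigr => i _; rewrite (ringmorN ix1a.1) mulNr.
    + move=> x y [s1 ->] [s2 ->].
      exists [seq (z1.1 * z2.1, z1.2 * z2.2) | z1 <- s1, z2 <- s2].
      rewrite big_allpairs_dep /= mulr_suml; apply: eq_bigr => i _.
      rewrite mulr_sumr; apply: eq_bigr => j _ /=.
      rewrite (ringmorM ix1a.1) (ringmorM iy1a.1).
      by rewrite -!mulrA; congr (_ * _); rewrite mulrC -mulrA; congr (_ * _); rewrite mulrC.
  - by move=> w; exists [:: (w, 1)]; rewrite big_seq1 /= iy11 mulr1.
  - by move=> v; exists [:: (1, v)]; rewrite big_seq1 /= ix11 mul1r.
pose G1 y := L1 (theta (dP y)).
pose G2 y := L2 (theta (dP y)).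
have G1D : forall x y, G1 (x + y) = G1 x + G1 y.
  by move=> x y; rewrite /G1 dPd.1 (ringmorD tha.1) (ringmorD L1a.1).
have G2D : forall x y, G2 (x + y) = G2 x + G2 y.
  by move=> x y; rewrite /G2 dPd.1 (ringmorD tha.1) (ringmorD L2a.1).
have G1p : forall w v, G1 (ix1 w * iy1 v) = ix1 (ellA (dA' w)) * iy1 v.
  move=> w v; rewrite /G1 thd (ringmorD L1a.1) !(ringmorM L1a.1) !L11 !L12 zS1 zS2.
  by rewrite (ringmor0 iy1a.1) mulr0 addr0.
have G2p : forall w v, G2 (ix1 w * iy1 v) = ix1 w * iy1 (lam (dS v)).
  move=> w v; rewrite /G2 thd (ringmorD L2a.1) !(ringmorM L2a.1) !L21 !L22.
  by rewrite (cd w).1 (cd w).2 (ringmor0 ix1a.1) mul0r add0r.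
have Hx1 : G1 (H (dS (jM m))) = H (dS (jM m)).
  by have := H3 (dS' (dS (jM m))); rewrite TH2 ellS4.
have Hx2 : G2 (H (dS (jM m))) = H (dS (jM m)).
  by have := H4 (dS' (dS (jM m))); rewrite TH2 cS4 Tlam2 lam4.
have [s hs] := ca (H (dS (jM m))).
have e : H (dS (jM m)) =
    \sum_(z <- s) ix1 (ellA (dA' z.1)) * iy1 (lam (dS z.2)).
  rewrite -{1}Hx1 -Hx2 hs (add_sum G2D) (add_sum G1D).
  by apply: eq_bigr => z _; rewrite G2p G1p.
have fin : forall s0 : seq (TA * SM), exists s' : seq ((A * A) * M),
    \sum_(z <- s0) ix1 (ellA (dA' z.1)) * iy1 (lam (dS z.2)) =
    \sum_(t <- s') ix1 (pA t.1.1 * dA t.1.2) * iy1 (jM t.2).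
  elim => [|z s0 [s' IH]]; first by exists [::]; rewrite !big_nil.
  have [_ [sw hw]] := cb z.1; have [_ [mv hv]] := cc z.2.
  exists (map (fun a => (a, mv)) sw ++ s'); rewrite big_cons big_cat IH big_map hw hv.
  congr (_ + _); rewrite (add_sum (ringmorD ix1a.1)) mulr_suml.
  by apply: eq_bigr.
have [s' hs'] := fin s.
by exists s'; rewrite e hs'.
Qed.
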